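(* For every state $\rho$, $C_f^{\mathcal U}(\rho)\ge2\max_{i\neq j}|\rho_{ij}|$. Moreover, for every single-qubit state $\rho=\begin{pmatrix}p&z\\ z^*&1-p\end{pmatrix}$, \[ C_f^{\mathcal U}(\rho)=\begin{cases}2|z| & \text{if } |z|\le\min\{p,1-p\},\\ +\infty&\text{otherwise.}\end{cases} \]
   Context: Fixed computational basis; logs base 2. $\mathcal U_k$ is the set of uniformly coherent states $|\Psi\rangle=k^{-1/2}\sum_{j\in J}e^{i\theta_j}|j\rangle$ with $|J|=k$, $\theta_j\in\mathbb R$. $C_f^{\mathcal U}(\rho)=\inf\{\sum_\alpha p_\alpha\log k_\alpha:\rho=\sum_\alpha p_\alpha|\Psi_\alpha\rangle\langle\Psi_\alpha|,\ |\Psi_\alpha\rangle\in\mathcal U_{k_\alpha}\}$ over finite convex decompositions, and $+\infty$ if none exists. *)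

(* Defs.v *)
From HB Require Import structures.
From mathcomp Require Import all_boot all_order all_algebra.
From mathcomp Require Import complex.
From mathcomp Require Import all_classical all_reals all_analysis.
Set Implicit Arguments. Unset Strict Implicit. Unset Printing Implicit Defensive.
Import Order.TTheory GRing.Theory Num.Theory.
Local Open Scope ring_scope.

Section Defs.
Variable R : realType.
Local Notation C := R[i].

Definition cmod (z : C) : R := Num.sqrt (complex.Re z ^+ 2 + complex.Im z ^+ 2).

Definition adj (m n : nat) (A : 'M[C]_(m, n)) : 'M[C]_(n, m) := (map_mx conjc A)^T.

Definition log2 (x : R) : R := ln x / ln 2.

Definition is_state (d : nat) (rho : 'M[C]_d) : Prop :=
  adj rho = rho /\
  (forall x : 'cV[C]_d, 0 <= (adj x *m rho *m x) 0 0) /\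
  \tr rho = 1.

Definition unif_coherent (d k : nat) (psi : 'cV[C]_d) : Prop :=
  (0 < k)%N /\
  exists (J : {set 'I_d}) (theta : 'I_d -> R),
    #|J| = k /\
    forall j : 'I_d, psi j 0 =
      if j \in J then real_complex R ((Num.sqrt (k%:R))^-1) * (Complex (cos (theta j)) (sin (theta j)))
      else 0.

Definition CfU_costs (d : nat) (rho : 'M[C]_d) : set R :=
  [set c | exists (m : nat) (p : 'I_m -> R) (k : 'I_m -> nat) (psi : 'I_m -> 'cV[C]_d),
     (forall a, 0 <= p a) /\ \sum_(a < m) p a = 1 /\
     (forall a, unif_coherent (k a) (psi a)) /\
     rho = \sum_(a < m) real_complex R (p a) *: (psi a *m adj (psi a)) /\
     c = \sum_(a < m) p a * log2 (k a)%:R].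

(* C_f^U(rho); the infimum of the empty set is +oo *)
Definition CfU (d : nat) (rho : 'M[C]_d) : \bar R :=
  ereal_inf [set c%:E | c in CfU_costs rho].

(* max_{i <> j} |rho_ij| (0 if d <= 1) *)
Definition max_offdiag (d : nat) (rho : 'M[C]_d) : R :=
  \big[Num.max/0]_(i < d) \big[Num.max/0]_(j < d | i != j) cmod (rho i j).

Definition qubit (p : R) (z : C) : 'M[C]_2 :=
  \matrix_(i < 2, j < 2)
    if (i == 0 :> nat) then (if (j == 0 :> nat) then real_complex R p else z)
    else (if (j == 0 :> nat) then conjc z else real_complex R (1 - p)).

End Defs.

(* Main.v *)
Require Import Defs.
From HB Require Import structures.
From mathcomp Require Import all_boot all_order all_algebra.
From mathcomp Require Import complex.
From mathcomp Require Import all_classical all_reals all_analysis.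
From mathcomp Require Import lra ring.
Set Implicit Arguments. Unset Strict Implicit.
Import Order.TTheory GRing.Theory Num.Theory.
Local Open Scope ring_scope.
Local Open Scope complex_scope.
Section S.
Variable R : realType.
Local Notation C := R[i].
Lemma cinj (a b : R) : a%:C = b%:C -> a = b.
Proof. by case. Qed.
Lemma rcM (a b : R) : (a * b)%:C = a%:C * b%:C :> C.
Proof. by apply/eqP; rewrite eq_complex /= !mulr0 !mul0r subr0 addr0 !eqxx. Qed.
Lemma rcD (a b : R) : (a + b)%:C = a%:C + b%:C :> C.
Proof. by apply/eqP; rewrite eq_complex /= addr0 !eqxx. Qed.
Lemma rc0 : (0 : R)%:C = 0 :> C. Proof. by []. Qed.
Lemma rc_sum m (F : 'I_m -> R) : (\sum_(a < m) F a)%:C = \sum_(a < m) (F a)%:C :> C.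
Proof. elim/big_rec2: _ => // a x y _ <-; by rewrite rcD. Qed.
Lemma rcX (a : R) n : (a ^+ n)%:C = a%:C ^+ n :> C.
Proof. elim: n => [|n IH]; first by []. by rewrite !exprS rcM IH. Qed.
Lemma normE (z : C) : `|z| = (cmod z)%:C.
Proof. by rewrite normc_def. Qed.
Lemma cmod_ge0 (z : C) : 0 <= cmod z.
Proof. by have := normr_ge0 z; rewrite normE -rc0 lecR. Qed.
Lemma cmodM (x y : C) : cmod (x * y) = cmod x * cmod y.
Proof. by apply: cinj; rewrite rcM -!normE normrM. Qed.
Lemma cmodJ (x : C) : cmod (conjc x) = cmod x.
Proof. by apply: cinj; rewrite -!normE normcJ. Qed.
Lemma cmodR (x : R) : cmod (x%:C) = `|x|.
Proof. by rewrite /cmod /= expr0n /= addr0 sqrtr_sqr. Qed.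
Lemma cmodD (x y : C) : cmod (x + y) <= cmod x + cmod y.
Proof. by have := ler_normD x y; rewrite !normE -rcD lecR. Qed.
Lemma cmod_sum m (F : 'I_m -> C) : cmod (\sum_(a < m) F a) <= \sum_(a < m) cmod (F a).
Proof. elim/big_rec2: _ => [|a x y _ H]; first by rewrite /cmod /= expr0n /= addr0 sqrtr0.
apply: le_trans (cmodD _ _) _; exact: lerD. Qed.
Lemma sqr_cmod (x : C) : x * conjc x = (cmod x ^+ 2)%:C.
Proof. by rewrite rcX -normE sqr_normc. Qed.

Definition ex (t : R) : C := Complex (cos t) (sin t).
Lemma cmod_ex t : cmod (ex t) = 1.
Proof. by rewrite /cmod /ex /= cos2Dsin2 sqrtr1. Qed.
Lemma ex_conj t : ex t * conjc (ex t) = 1.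
Proof. by rewrite sqr_cmod cmod_ex expr1n. Qed.
Lemma angle (a b : R) : a ^+ 2 + b ^+ 2 = 1 -> exists t, cos t = a /\ sin t = b.
Proof.
move=> h.
have ha : -1 <= a <= 1 by apply/andP; split; nra.
have hs : Num.sqrt (1 - a ^+ 2) = `|b| by rewrite -h addrAC subrr add0r sqrtr_sqr.
have [b0|b0] := leP 0 b.
  by exists (acos a); rewrite acosK ?sin_acos // ?hs ?ger0_norm //; rewrite in_itv /=.
exists (- acos a); rewrite cosN sinN acosK ?sin_acos // ?hs ?ltr0_norm ?opprK //.
Qed.
Lemma cmod0 : cmod (0 : C) = 0.
Proof. by rewrite /cmod /= expr0n /= addr0 sqrtr0. Qed.
Lemma polar (z : C) : exists t, z = (cmod z)%:C * ex t.
Proof.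
have [->|z0] := eqVneq z 0; first by exists 0; rewrite cmod0 rc0 mul0r.
have hr : cmod z ^+ 2 = complex.Re z ^+ 2 + complex.Im z ^+ 2.
  by rewrite /cmod sqr_sqrtr // addr_ge0 // sqr_ge0.
have r0 : cmod z != 0.
  apply: contra z0 => /eqP r0.
  by rewrite -normr_eq0 normE r0.
have H : (complex.Re z / cmod z) ^+ 2 + (complex.Im z / cmod z) ^+ 2 = 1.
  by rewrite !expr_div_n -mulrDl -hr divff // expf_neq0.
have [t [ht1 ht2]] := angle H.
exists t; apply/eqP; rewrite eq_complex /= ht1 ht2 !mul0r subr0 addr0.
by rewrite !mulrA !(mulrC (cmod z)) !mulfK // !eqxx.
Qed.
Lemma ln2_gt0 : 0 < ln (2 : R).
Proof. by apply: ln_gt0; rewrite ltr1n. Qed.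
Lemma log2_ge0 (k : nat) : (0 < k)%N -> 0 <= log2 (k%:R : R).
Proof.
move=> k0; rewrite /log2 divr_ge0 ?ln_ge0 ?ler1n //; exact: ltW ln2_gt0.
Qed.
Lemma log2_ge1 (k : nat) : (2 <= k)%N -> 1 <= log2 (k%:R : R).
Proof.
move=> k2; rewrite /log2 ler_pdivlMr ?ln2_gt0 // mul1r ler_ln ?posrE ?ler_nat //.
by rewrite ltr0n; apply: leq_trans k2.
Qed.
Lemma cmod_s (k : nat) (t : R) : cmod (((Num.sqrt (k%:R))^-1)%:C * ex t) = (Num.sqrt (k%:R))^-1.
Proof. by rewrite cmodM cmod_ex mulr1 cmodR ger0_norm // invr_ge0 sqrtr_ge0. Qed.
Lemma s_sq (k : nat) : (0 < k)%N -> (Num.sqrt (k%:R : R))^-1 * (Num.sqrt (k%:R))^-1 = k%:R^-1.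
Proof. by move=> k0; rewrite -invrM ?unitfE ?sqrtr_eq0 -?ltNge ?ltr0n // -expr2 sqr_sqrtr. Qed.

Lemma uc_off d k (psi : 'cV[C]_d) i j : unif_coherent k psi -> i != j ->
  2 * (cmod (psi i 0) * cmod (psi j 0)) <= log2 (k%:R).
Proof.
move=> [k0 [J [th [cJ hp]]]] ij; rewrite !hp.
case iJ: (i \in J); case jJ: (j \in J); rewrite ?cmod0 ?mul0r ?mulr0 ?log2_ge0 //.
have k2 : (2 <= k)%N.
  rewrite -cJ (leq_trans _ (subset_leq_card (_ : [set i; j] \subset J))) ?cards2 ?ij //.
  by rewrite finset.subUset !finset.sub1set iJ jJ.
rewrite !cmod_s s_sq //; apply: le_trans (log2_ge1 k2).
by rewrite ler_pdivrMr ?ltr0n ?(leq_trans _ k2) // mul1r ler_nat.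
Qed.

Lemma uc_dom d k (psi : 'cV[C]_d) i j : unif_coherent k psi ->
  cmod (psi i 0) * cmod (psi j 0) <= cmod (psi i 0) ^+ 2.
Proof.
move=> [k0 [J [th [cJ hp]]]]; rewrite !hp.
case iJ: (i \in J); case jJ: (j \in J); rewrite ?cmod0 ?mul0r ?mulr0 ?expr2 ?cmod_s //.
Qed.
Lemma outer_entry d (psi : 'cV[C]_d) i j : (psi *m adj psi) i j = psi i 0 * conjc (psi j 0).
Proof. by rewrite !mxE big_ord1 !mxE. Qed.

Lemma decomp_entry d m (rho : 'M[C]_d) (p : 'I_m -> R) (psi : 'I_m -> 'cV[C]_d) i j :
  rho = \sum_(a < m) real_complex R (p a) *: (psi a *m adj (psi a)) ->
  rho i j = \sum_(a < m) (p a)%:C * (psi a i 0 * conjc (psi a j 0)).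
Proof. by move=> ->; rewrite summxE; apply: eq_bigr => a _; rewrite mxE outer_entry. Qed.

Lemma decomp_bound d m (rho : 'M[C]_d) (p : 'I_m -> R) (psi : 'I_m -> 'cV[C]_d) i j :
  (forall a, 0 <= p a) ->
  rho = \sum_(a < m) real_complex R (p a) *: (psi a *m adj (psi a)) ->
  cmod (rho i j) <= \sum_(a < m) p a * (cmod (psi a i 0) * cmod (psi a j 0)).
Proof.
move=> p0 /(decomp_entry i j) ->; apply: le_trans (cmod_sum _) _.
by apply: ler_sum => a _; rewrite !cmodM cmodR cmodJ ger0_norm.
Qed.

Lemma part1_core d (rho : 'M[C]_d) c i j : CfU_costs rho c -> i != j ->
  2 * cmod (rho i j) <= c.
Proof.
move=> [m [p [k [psi [p0 [p1 [uc [hr ->]]]]]]]] ij.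
apply: le_trans (ler_wpM2l _ (decomp_bound i j p0 hr)) _; first by [].
rewrite mulr_sumr; apply: ler_sum => a _.
by rewrite mulrCA ler_wpM2l // uc_off.
Qed.

Lemma cost_ge0 d (rho : 'M[C]_d) c : CfU_costs rho c -> 0 <= c.
Proof.
move=> [m [p [k [psi [p0 [p1 [uc [hr ->]]]]]]]].
by apply: sumr_ge0 => a _; rewrite mulr_ge0 // log2_ge0 //; case: (uc a).
Qed.

Lemma part1 d (rho : 'M[C]_d) : ((2 * max_offdiag rho)%:E <= CfU rho)%E.
Proof.
apply: le_ereal_inf_tmp => _ [c hc <-]; rewrite lee_fin.
rewrite mulrC -ler_pdivlMr //; apply: bigmax_le => [|i _].
  by rewrite divr_ge0 // (cost_ge0 hc).
apply: bigmax_le => [|j ij]; first by rewrite divr_ge0 // (cost_ge0 hc).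
by rewrite ler_pdivlMr // mulrC part1_core.
Qed.
Definition ucv d (J : {set 'I_d}) (th : 'I_d -> R) : 'cV[C]_d :=
  \col_j (if j \in J then ((Num.sqrt (#|J|%:R))^-1)%:C * ex (th j) else 0).

Lemma ucv_uc d (J : {set 'I_d}) th : (0 < #|J|)%N -> unif_coherent #|J| (ucv J th).
Proof. by move=> J0; split=> //; exists J, th; split=> // j; rewrite mxE. Qed.

Lemma conjR (a : R) : conjc (a%:C) = a%:C :> C.
Proof. by apply/eqP; rewrite eq_complex /= oppr0 !eqxx. Qed.

Lemma conjM (x y : C) : conjc (x * y) = conjc x * conjc y.
Proof. by case: x => a b; case: y => c e; apply/eqP; rewrite eq_complex /=; apply/andP; split; apply/eqP; ring. Qed.

Lemma outer_ucv d (J : {set 'I_d}) th i j : (0 < #|J|)%N ->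
  (ucv J th *m adj (ucv J th)) i j =
  if (i \in J) && (j \in J) then ((#|J|%:R)^-1)%:C * (ex (th i) * conjc (ex (th j))) else 0.
Proof.
move=> J0; rewrite outer_entry !mxE.
case: (i \in J); case: (j \in J); rewrite ?conjM ?conjR ?mul0r ?mulr0 ?conjc0 //=.
by rewrite mulrACA -rcM s_sq.
Qed.
Lemma ex0 : ex 0 = 1.
Proof. by rewrite /ex cos0 sin0. Qed.
Lemma log2_1 : log2 (1%:R : R) = 0.
Proof. by rewrite /log2 mulr1n ln1 mul0r. Qed.
Lemma log2_2 : log2 (2%:R : R) = 1.
Proof. by rewrite /log2 divff // gt_eqF // ln2_gt0. Qed.

Lemma scale_entry d (A : 'M[C]_d) c i j : (c *: A) i j = c * A i j.
Proof. by rewrite mxE. Qed.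
Lemma exc t : ex t * (Complex (cos t) (- sin t)) = 1.
Proof. exact: ex_conj. Qed.
Lemma conj_ex t : conjc (ex t) = Complex (cos t) (- sin t).
Proof. by []. Qed.
Lemma exc0 : Complex (cos 0) (- sin 0) = 1 :> C.
Proof. by rewrite cos0 sin0 oppr0. Qed.
Lemma rcB (a b : R) : (a - b)%:C = a%:C - b%:C :> C.
Proof. by apply/eqP; rewrite eq_complex /= subr0 !eqxx. Qed.
Lemma rc1 : (1 : R)%:C = 1 :> C. Proof. by []. Qed.
Lemma rcn n : (n%:R : R)%:C = n%:R :> C.
Proof. elim: n => [|n IH]; first by []. by rewrite -addn1 !natrD rcD IH. Qed.
Lemma rcV (a : R) : (a^-1)%:C = (a%:C)^-1 :> C.
Proof.
have [->|a0] := eqVneq a 0; first by rewrite invr0 rc0 invr0.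
apply: (@mulfI _ (a%:C)); first by apply: contra a0 => /eqP [] ->.
by rewrite -rcM !divff //; apply: contra a0 => /eqP [] ->.
Qed.
Lemma upper (p : R) (z : C) : cmod z <= Num.min p (1 - p) ->
  CfU_costs (qubit p z) (2 * cmod z).
Proof.
rewrite le_min => /andP[h1 h2].
have [t ht] := polar z.
set r := cmod z in h1 h2 ht *.
have r0 : 0 <= r by apply: cmod_ge0.
pose P (a : 'I_3) : R := match val a with 0 => p - r | 1 => 1 - p - r | _ => 2 * r end.
pose K (a : 'I_3) : nat := match val a with 0 => 1 | 1 => 1 | _ => 2 end.
pose J (a : 'I_3) : {set 'I_2} := match val a with 0 => [set ord0] | 1 => [set ord_max] | _ => [set: 'I_2]%SET end.
pose th (j : 'I_2) : R := if val j == 0 then t else 0.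
have cJ a : #|J a| = K a.
  by rewrite /J /K; case: a => [[|[|[|//]]] Ha] /=; rewrite ?cards1 ?cardsT ?card_ord.
have J0 a : (0 < #|J a|)%N by rewrite cJ /K; case: (val a) => [|[|]].
exists 3%N, P, K, (fun a => ucv (J a) th); split; last split; last split; last split.
- by case=> [[|[|[|//]]] Ha]; rewrite /P /= ?subr_ge0 ?mulr_ge0 // lerBrDr -lerBlDl.
- by rewrite !big_ord_recr big_ord0 /= /P /=; ring.
- by move=> a; rewrite -cJ; apply: ucv_uc; rewrite cJ /K; case: (val a) => [|[|]].
- apply/matrixP => i j; rewrite summxE !big_ord_recr big_ord0 /= add0r.
  rewrite !scale_entry !outer_ucv ?J0 //.
  rewrite /J /K /P /th /= !cards1 cardsT card_ord /qubit mxE.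
  case: i => [[|[|//]] Hi]; case: j => [[|[|//]] Hj]; rewrite !finset.in_set1 ?finset.in_setT /=.
  all: rewrite ?exc ?ht ?conjM ?conjR ?conj_ex ?exc ?ex0 ?exc0 ?rcB ?rcM ?rcV ?rc1 ?rcn.
  all: rewrite ?mulVKf ?subrK ?pnatr_eq0 //.
  all: rewrite ?invr1 ?mulr1 ?mul1r ?mulr0 ?addr0 ?add0r.
  all: rewrite ?[2 * r%:C]mulrC -?mulrA ?mulfV ?mulr1 ?pnatr_eq0 //.
  all: rewrite ?mulVKf ?subrK ?pnatr_eq0 //.
- by rewrite !big_ord_recr big_ord0 /= /P /K /= !log2_1 log2_2; ring.
Qed.
Lemma offdiag_le d m (rho : 'M[C]_d) (p : 'I_m -> R) k (psi : 'I_m -> 'cV[C]_d) i j s :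
  (forall a, 0 <= p a) -> (forall a, unif_coherent (k a) (psi a)) ->
  rho = \sum_(a < m) real_complex R (p a) *: (psi a *m adj (psi a)) ->
  rho i i = s%:C -> cmod (rho i j) <= s.
Proof.
move=> p0 uc hr hs; apply: le_trans (decomp_bound i j p0 hr) _.
have -> : s = \sum_(a < m) p a * cmod (psi a i 0) ^+ 2.
  apply: cinj; rewrite -hs (decomp_entry i i hr) rc_sum; apply: eq_bigr => a _.
  by rewrite sqr_cmod rcM.
by apply: ler_sum => a _; rewrite ler_wpM2l // (uc_dom _ _ (uc a)).
Qed.

Local Open Scope classical_set_scope.
Lemma lower_else (p : R) (z : C) : ~~ (cmod z <= Num.min p (1 - p)) ->
  CfU (qubit p z) = +oo%E.
Proof.
move=> h; rewrite /CfU.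
suff -> : [set c%:E | c in CfU_costs (qubit p z)] = set0 by apply: ereal_inf0.
apply/seteqP; split => // y [c [m [pp [k [psi [p0 [p1 [uc [hr _]]]]]]]] _].
move/negP: h; apply; rewrite le_min; apply/andP; split.
  have := offdiag_le (i:=ord0) ord_max p0 uc hr.
  by rewrite /qubit !mxE /=; apply.
have := offdiag_le (i:=ord_max) ord0 p0 uc hr.
by rewrite /qubit !mxE /= cmodJ; apply.
Qed.

Lemma maxoff (p : R) (z : C) : cmod z <= max_offdiag (qubit p z).
Proof.
rewrite /max_offdiag; apply: le_trans (le_bigmax _ _ ord0).
apply: le_trans (le_bigmax_cond _ (j := ord_max) (P := fun j => ord0 != j) _ _) => //=.
by rewrite /qubit !mxE.
Qed.
End S.

Theorem proposition4 (R : realType) :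
  (forall (d : nat) (rho : 'M[R[i]]_d), is_state rho ->
     ((2 * max_offdiag rho)%:E <= CfU rho)%E) /\
  (forall (p : R) (z : R[i]), is_state (qubit p z) ->
     CfU (qubit p z) =
       if cmod z <= Num.min p (1 - p) then (2 * cmod z)%:E else +oo%E).
Proof.
split; first by move=> d rho _; apply: part1.
move=> p z _; case: ifPn => h; last exact: lower_else.
apply/le_anti/andP; split.
  by apply: ereal_inf_lbound; exists (2 * cmod z) => //; apply: upper.
apply: le_trans (part1 _); rewrite lee_fin ler_wpM2l //; exact: maxoff.
Qed.
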